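(* Let $\varphi\colon\mathcal{M}\to\mathcal{X}$ be a smooth lift, $y\in\mathcal{M}$, $x=\varphi(y)$. Then $W_y=\{w\in\mathcal{E}: \exists\,\alpha>0 \text{ such that } y \text{ is 2-critical for } g=f\circ\varphi \text{ with } f(x')=\langle x',w\rangle+\tfrac{\alpha}{2}\|x'-x\|^2\}$. In particular, $W_y$ is a convex cone.
   Context: $\mathcal{E}$ is a finite-dimensional real inner product space, $\mathcal{M}$ a smooth manifold, and $\varphi\colon\mathcal{M}\to\mathcal{E}$ smooth with $\varphi(\mathcal{M})=\mathcal{X}$. For $f\colon\mathcal{E}\to\mathbb{R}$, $g=f\circ\varphi$; $y$ is 2-critical for $g$ if $(g\circ c)'(0)=0$ and $(g\circ c)''(0)\ge0$ for all smooth curves $c\colon\mathbb{R}\to\mathcal{M}$ with $c(0)=y$. $W_y$ is the set of $w\in\mathcal{E}$ for which there exists a twice differentiable $f\colon\mathcal{E}\to\mathbb{R}$ with $\nabla f(x)=w$ and $y$ 2-critical for $g=f\circ\varphi$. *)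

(* Defs.v *)
From HB Require Import structures.
From mathcomp Require Import all_boot all_order all_algebra.
From mathcomp Require Import all_classical all_reals all_analysis.
Set Implicit Arguments. Unset Strict Implicit. Unset Printing Implicit Defensive.
Import Order.TTheory GRing.Theory Num.Theory.
Import numFieldNormedType.Exports.
Local Open Scope classical_set_scope.
Local Open Scope ring_scope.

Fixpoint Dseq (R : realType) (V W : normedModType R) (vs : seq V) (f : V -> W)
  : V -> W :=
  match vs with
  | [::] => f
  | v :: vs' => fun x => 'D_v (Dseq vs' f) x
  end.

Definition smooth_on (R : realType) (V W : normedModType R) (A : set V)
  (f : V -> W) : Prop :=
  forall (vs : seq V) (x : V), A x ->
    (forall v : V, derivable (Dseq vs f) x v) /\ {for x, continuous (Dseq vs f)}.

Record manifold (R : realType) (M : Type) (m : nat) := Manifold {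
  chart_idx : Type;
  chart_dom : chart_idx -> set M;
  chart : chart_idx -> M -> 'rV[R]_m;
  chart_cover : forall p : M, exists i, chart_dom i p;
  chart_inj : forall i p q, chart_dom i p -> chart_dom i q ->
                chart i p = chart i q -> p = q;
  chart_open : forall i j, open (chart i @` (chart_dom i `&` chart_dom j));
  chart_open_dom : forall i, open (chart i @` chart_dom i);
  chart_smooth_transition : forall i j, exists F : 'rV[R]_m -> 'rV[R]_m,
      smooth_on (chart i @` (chart_dom i `&` chart_dom j)) F /\
      (forall p, chart_dom i p -> chart_dom j p -> F (chart i p) = chart j p)
}.

Definition smooth_curve (R : realType) (M : Type) (m : nat)
  (A : manifold R M m) (c : R -> M) : Prop :=
  forall t : R, exists i : chart_idx A, exists2 e : R, 0 < e &
    (forall s : R, `|s - t| < e -> chart_dom i (c s)) /\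
    smooth_on [set s : R | `|s - t| < e] (fun s => chart i (c s)).

Definition smooth_map (R : realType) (M : Type) (m : nat) (W : normedModType R)
  (A : manifold R M m) (phi : M -> W) : Prop :=
  forall i : chart_idx A, exists F : 'rV[R]_m -> W,
    smooth_on (chart i @` chart_dom i) F /\
    (forall p, chart_dom i p -> F (chart i p) = phi p).

(* The Euclidean space E = R^n with the standard inner product. *)
Definition dotp (R : realType) (n : nat) (u v : 'rV[R]_n) : R :=
  (u *m v^T) 0 0.

(* Gradient: the vector of partial derivatives (for differentiable f,
   <grad f x, h> = 'd f x h). *)
Definition grad (R : realType) (n : nat) (f : 'rV[R]_n -> R) (x : 'rV[R]_n)
  : 'rV[R]_n := \row_j ('d f x (delta_mx 0 j)).

Definition twice_differentiable (R : realType) (n : nat) (f : 'rV[R]_n -> R)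
  : Prop :=
  (forall x, differentiable f x) /\ (forall x, differentiable (grad f) x).

Definition two_critical (R : realType) (M : Type) (m : nat)
  (A : manifold R M m) (g : M -> R) (y : M) : Prop :=
  forall c : R -> M, smooth_curve A c -> c 0 = y ->
    derive1 (g \o c) 0 = 0 /\ 0 <= derive1 (derive1 (g \o c)) 0.

Definition Wset (R : realType) (M : Type) (m n : nat) (A : manifold R M m)
  (phi : M -> 'rV[R]_n) (y : M) : set 'rV[R]_n :=
  [set w | exists f : 'rV[R]_n -> R,
     twice_differentiable f /\ grad f (phi y) = w /\ two_critical A (f \o phi) y].

(* Main.v *)
Require Import Defs.
From HB Require Import structures.
From mathcomp Require Import all_boot all_order all_algebra.
From mathcomp Require Import all_classical all_reals all_analysis.
From mathcomp Require Import lra ring.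
Import Order.TTheory GRing.Theory Num.Theory.
Import numFieldNormedType.Exports.
Local Open Scope classical_set_scope.
Local Open Scope ring_scope.
Set Warnings "-notation-overridden,-ambiguous-paths,-notation-incompatible-prefix".

Section P1.
Variable R : realType.

Lemma line_quot (V W : normedModType R) (G : V -> W) (a v : V) (t : R) :
  (fun h : R => h^-1 *: (((fun s : R => G (a + s *: v)) \o shift t) (h *: 1) - G (a + t *: v)))
  = (fun h : R => h^-1 *: ((G \o shift (a + t *: v)) (h *: v) - G (a + t *: v))).
Proof.
apply: funext => h /=; congr (_ *: (G _ - _)).
by rewrite /= [h *: 1]mulr1 scalerDl addrCA addrA.
Qed.

Lemma line_derivable (V W : normedModType R) (G : V -> W) (a v : V) (t : R) :
  derivable G (a + t *: v) v -> derivable (fun s : R => G (a + s *: v)) t 1.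
Proof. by rewrite /derivable line_quot. Qed.

Lemma line_derive (V W : normedModType R) (G : V -> W) (a v : V) (t : R) :
  'D_1 (fun s : R => G (a + s *: v)) t = 'D_v G (a + t *: v).
Proof. by rewrite /derive line_quot. Qed.

Lemma mvt_dir (V : normedModType R) (G : V -> R) (D : V -> R) (a v : V) (d : R) :
  (forall t, `|t| <= `|d| -> is_derive (a + t *: v) v G (D (a + t *: v))) ->
  exists xi, `|xi| <= `|d| /\ G (a + d *: v) - G a = d * D (a + xi *: v).
Proof.
move=> H.
pose g := fun s : R => G (a + s *: v).
have gd : forall t : R, `|t| <= `|d| -> is_derive t (1:R) g (D (a + t *: v)).
  move=> t /H [d1 d2]; apply: DeriveDef; first exact: line_derivable.
  by rewrite line_derive.
have ga : g 0 = G a by rewrite /g scale0r addr0.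
have [d0|dn0] := eqVneq d 0.
  by exists 0; rewrite d0 normr0 lexx scale0r addr0 subrr mul0r.
have [dpos|dneg] := ltP 0 d.
  have [||c cin E] := @MVT R g (fun t => D (a + t *: v)) 0 d dpos.
  - move=> t; rewrite in_itv /= => /andP[t0 td]; apply: gd.
    by rewrite !ger0_norm ?ltW.
  - apply: derivable_within_continuous => t; rewrite in_itv /= => /andP[t0 td].
    have : `|t| <= `|d| by rewrite !ger0_norm // ltW.
    by move=> /gd [].
  exists c; move: cin; rewrite in_itv /= => /andP[c0 cd]; split.
    by rewrite !ger0_norm ?ltW.
  by move: E; rewrite ga subr0 mulrC /g.
have dlt : d < 0 by rewrite lt_neqAle dn0.
have [||c cin E] := @MVT R g (fun t => D (a + t *: v)) d 0 dlt.
- move=> t; rewrite in_itv /= => /andP[t0 td]; apply: gd.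
  by rewrite !ltr0_norm // lerN2 ltW.
- apply: derivable_within_continuous => t; rewrite in_itv /= => /andP[t0 td].
  have [] := gd t => //.
  by rewrite (ler0_norm td) (ltr0_norm dlt) lerN2.
exists c; move: cin; rewrite in_itv /= => /andP[c0 cd]; split.
  by rewrite !ltr0_norm // lerN2 ltW.
move: E; rewrite ga sub0r => E.
rewrite /g -[LHS]opprB E; rewrite /g in E; lra.
Qed.

End P1.
Arguments mvt_dir {R V G D a v d}.
Arguments line_derivable {R V W G a v t}.


Section P2.
Variable R : realType.

Lemma entry_le (m n : nat) (M : 'M[R]_(m, n)) i j : `|M i j| <= `|M|.
Proof.
rewrite [leRHS]/Num.Def.normr /= mx_normrE.
by apply: (le_trans _ (le_bigmax _ _ (i, j))).
Qed.

Lemma mx_le (m n : nat) (M : 'M[R]_(m, n)) (c : R) :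
  0 <= c -> (forall i j, `|M i j| <= c) -> `|M| <= c.
Proof.
move=> c0 H; rewrite [leLHS]/Num.Def.normr /= mx_normrE.
by apply: bigmax_le => // -[i j] _; apply: H.
Qed.

Arguments entry_le {m n}.
Arguments mx_le {m n}.

Definition Pmid (m : nat) (p q : 'rV[R]_m) (k : nat) : 'rV[R]_m :=
  \row_i (if (i < k)%N then q 0 i else p 0 i).

Arguments Pmid {m}.

Lemma Pmid0 m (p q : 'rV[R]_m) : Pmid p q 0 = p.
Proof. by apply/rowP => i; rewrite !mxE /=. Qed.

Lemma PmidN m (p q : 'rV[R]_m) : Pmid p q m = q.
Proof. by apply/rowP => i; rewrite !mxE ltn_ord. Qed.

Lemma PmidS m (p q : 'rV[R]_m) (k : 'I_m) :
  Pmid p q k.+1 = Pmid p q k + (q 0 k - p 0 k) *: delta_mx 0 k.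
Proof.
apply/rowP => i; rewrite !mxE /= -val_eqE /= ltnS.
have [ik|ik|ik] := ltngtP i k.
- by rewrite mulr0 addr0.
- by rewrite mulr0 addr0.
- have -> : i = k by apply: val_inj.
  by rewrite mulr1 addrC subrK.
Qed.

Lemma pt_close m (p q : 'rV[R]_m) (k : 'I_m) t :
  `|t| <= `|q 0 k - p 0 k| ->
  `|p - (Pmid p q k + t *: delta_mx 0 k)| <= `|p - q|.
Proof.
move=> tle; apply: mx_le => // i j.
rewrite (ord1 i) !mxE /= -val_eqE /=.
have [jk|jk|jk] := ltngtP j k.
- rewrite mulr0 addr0.
  by apply: (le_trans _ (entry_le _ 0 j)); rewrite !mxE.
- by rewrite mulr0 addr0 subrr normr0.
- have -> : j = k by apply: val_inj.
  rewrite mulr1 opprD addrA subrr sub0r normrN.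
  apply: (le_trans tle); rewrite -normrN opprB.
  by apply: (le_trans _ (entry_le _ 0 k)); rewrite !mxE.
Qed.

End P2.
Arguments Pmid {R m}.
Arguments pt_close {R m p q k t}.
Arguments PmidS {R m}.
Arguments Pmid0 {R m}.
Arguments PmidN {R m}.
Arguments entry_le {R m n}.
Arguments mx_le {R m n}.


Section P3.
Variable R : realType.

Lemma cvg_sumI (T : Type) (F : set_system T) {FF : Filter F} n
  (f : 'I_n -> T -> R) (l : 'I_n -> R) :
  (forall i, f i @ F --> l i) -> (fun x => \sum_i f i x) @ F --> \sum_i l i.
Proof.
elim: n f l => [|n IH] f l H.
  under eq_cvg do rewrite big_ord0.
  by rewrite big_ord0; apply: cvg_cst.
under eq_cvg do rewrite big_ord_recr.
rewrite big_ord_recr; apply: cvgD; last exact: H.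
exact: (IH (fun i => f (widen_ord (leqnSn n) i))).
Qed.

Lemma chainR m (G : 'rV[R]_m -> R) (D : 'I_m -> 'rV[R]_m -> R) (U : set 'rV[R]_m)
  (b : R -> 'rV[R]_m) (s0 : R) :
  open U -> U (b s0) ->
  (forall p j, U p -> is_derive p (delta_mx 0 j) G (D j p)) ->
  (forall j, {for b s0, continuous (D j)}) ->
  derivable b s0 1 ->
  is_derive s0 1 (G \o b) (\sum_j ('D_1 b s0) 0 j * D j (b s0)).
Proof.
move=> oU Up HD cD db.
set p := b s0; set d := 'D_1 b s0.
have [r r0 rU] : exists2 r : R, 0 < r & ball p r `<=` U.
  by apply/nbhs_ballP; apply: open_nbhs_nbhs; split.
pose q (h : R) := b (h *: 1 + s0).
pose qd (h : R) := h^-1 *: (q h - p).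
have qdd : qd @ 0^' --> d by exact: db.
have qE : q = fun h => p + h *: qd h.
  apply: funext => h; have [->|h0] := eqVneq h 0.
    by rewrite /q !scale0r add0r addr0.
  by rewrite /qd scalerA mulfV // scale1r addrC subrK.
have qp : q @ 0^' --> p.
  rewrite qE -[X in _ --> X]addr0; apply: cvgD; first exact: cvg_cst.
  rewrite -(scale0r d); apply: cvgZ => //; exact: cvg_within.
have ex : forall hk : R * 'I_m, exists xi : R, `|p - q hk.1| < r ->
    `|xi| <= `|q hk.1 0 hk.2 - p 0 hk.2| /\
    G (Pmid p (q hk.1) hk.2.+1) - G (Pmid p (q hk.1) hk.2) =
    (q hk.1 0 hk.2 - p 0 hk.2) * D hk.2 (Pmid p (q hk.1) hk.2 + xi *: delta_mx 0 hk.2).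
  move=> [h k] /=; case: (pselect (`|p - q h| < r)) => hr; last by exists 0.
  have [|xi [xi1 xi2]] := @mvt_dir R _ G (D k) (Pmid p (q h) k) (delta_mx 0 k)
      (q h 0 k - p 0 k).
    move=> t tle; apply: HD; apply: rU.
    rewrite -ball_normE /=.
    exact: (le_lt_trans (pt_close tle) hr).
  by exists xi => _; split => //; rewrite PmidS.
have [xi Hxi] := choice ex.
pose pt (h : R) (k : 'I_m) := Pmid p (q h) k + xi (h, k) *: delta_mx 0 k.
have qeq : {near 0^', (fun h => \sum_k qd h 0 k * D k (pt h k)) =1
    (fun h => h^-1 *: ((G \o b) (h *: 1 + s0) - (G \o b) s0))}.
  near=> h.
  have hr : `|p - q h| < r by near: h; exact: (cvgrPdist_lt _ _).1 qp _ r0.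
  rewrite /= -/(q h) -/p.
  have -> : G (q h) - G p = \sum_(k < m) (G (Pmid p (q h) k.+1) - G (Pmid p (q h) k)).
    rewrite -(big_mkord xpredT (fun k => G (Pmid p (q h) k.+1) - G (Pmid p (q h) k))).
    by rewrite telescope_sumr // PmidN Pmid0.
  rewrite [_ *: _]mulr_sumr; apply: eq_bigr => k _.
  have [_ ->] := Hxi (h, k) hr.
  by rewrite /qd !mxE mulrA.
have lim1 : (fun h => \sum_k qd h 0 k * D k (pt h k)) @ 0^' --> \sum_k d 0 k * D k p.
  apply: cvg_sumI => k.
  apply: (@cvgM _ _ _ _ (fun h => qd h 0 k) (fun h => D k (pt h k))).
    have H1 := (@coord_continuous R 1 m 0 k d). exact: (cvg_comp _ _ qdd H1).
  apply/cvgrPdist_lt => eps eps0.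
  have HH := (cvgrPdist_lt _ _).1 (cD k) eps eps0.
  have /nbhs_ballP[dl dl0 Hdl] := HH (nbhs_filter (b s0)).
  near=> h.
  have hr : `|p - q h| < r by near: h; exact: (cvgrPdist_lt _ _).1 qp _ r0.
  have hdl : `|p - q h| < dl by near: h; exact: (cvgrPdist_lt _ _).1 qp _ dl0.
  apply: Hdl; rewrite -ball_normE /=.
  have [H1 _] := Hxi (h, k) hr.
  exact: le_lt_trans (pt_close H1) hdl.
have Lc : (fun h => h^-1 *: ((G \o b) (h *: 1 + s0) - (G \o b) s0)) @ 0^' -->
    \sum_k d 0 k * D k p.
  exact: (cvg_trans (near_eq_cvg qeq) lim1).
apply: DeriveDef; first exact: cvgP Lc.
exact: cvg_lim Lc.
Unshelve. all: by end_near.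
Qed.

End P3.


Section P4.
Variable R : realType.

Lemma derivable_sumL (V W : normedModType R) n (h : 'I_n -> V -> W) x v :
  (forall i, derivable (h i) x v) -> derivable (fun y => \sum_i h i y) x v.
Proof. by move=> H; rewrite -fct_sumE; apply: derivable_sum. Qed.

Lemma derive_sumL (V W : normedModType R) n (h : 'I_n -> V -> W) x v :
  (forall i, derivable (h i) x v) ->
  'D_v (fun y => \sum_i h i y) x = \sum_i 'D_v (h i) x.
Proof. by move=> H; rewrite -fct_sumE; apply: derive_sum. Qed.

Lemma derivableML (V : normedModType R) (f g : V -> R) x v :
  derivable f x v -> derivable g x v -> derivable (fun y => f y * g y) x v.
Proof. exact: derivableM. Qed.

Lemma deriveML (V : normedModType R) (f g : V -> R) x v :
  derivable f x v -> derivable g x v ->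
  'D_v (fun y => f y * g y) x = f x * 'D_v g x + g x * 'D_v f x.
Proof. exact: deriveM. Qed.

Lemma chainV m n (F : 'rV[R]_m -> 'rV[R]_n) (U : set 'rV[R]_m)
  (b : R -> 'rV[R]_m) (s0 : R) :
  open U -> U (b s0) ->
  (forall p j, U p -> derivable F p (delta_mx 0 j)) ->
  (forall j, {for b s0, continuous (fun p => 'D_(delta_mx 0 j) F p)}) ->
  derivable b s0 1 ->
  is_derive s0 1 (F \o b)
    (\sum_j ('D_1 b s0) 0 j *: 'D_(delta_mx 0 j) F (b s0)).
Proof.
move=> oU Up HF cF db.
have comp : forall k, is_derive s0 1 (fun s => F (b s) 0 k)
    (\sum_j ('D_1 b s0) 0 j * ('D_(delta_mx 0 j) F (b s0)) 0 k).
  move=> k.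
  apply: (@chainR R m (fun p => F p 0 k) (fun j p => ('D_(delta_mx 0 j) F p) 0 k)
     U b s0 oU Up _ _ db).
  - move=> p j Upj; have dF := HF p j Upj; apply: DeriveDef.
      by move/derivable_mxP: dF; apply.
    by rewrite derive_mx // mxE.
  - move=> j; exact: (cvg_comp _ _ (cF j) (@coord_continuous R 1 n 0 k _)).
apply: DeriveDef.
  by apply/(derivable_mxP (F \o b)) => i k; rewrite (ord1 i); case: (comp k).
rewrite derive_mx; last by apply/(derivable_mxP (F \o b)) => i k; rewrite (ord1 i); case: (comp k).
apply/matrixP => i k; rewrite (ord1 i) !mxE (@derive_val _ _ _ _ _ _ _ (comp k)).
rewrite summxE; apply: eq_bigr => j _; by rewrite !mxE.
Qed.

End P4.


Section P5.
Variable R : realType.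

Lemma near_itv (t e s : R) : `|s - t| < e -> \forall s' \near s, `|s' - t| < e.
Proof.
move=> hs; apply/nbhs_ballP; exists (e - `|s - t|) => [|z]; first by simpl; lra.
rewrite -ball_normE /= => hz.
have := ler_distD s z t; rewrite ?(distrC z s); lra.
Qed.

Lemma local_deriv (M : Type) m n (A : manifold R M m) (phi : M -> 'rV[R]_n)
  (c : R -> M) (i : chart_idx A) (F : 'rV[R]_m -> 'rV[R]_n) (t e : R) :
  smooth_on (chart i @` chart_dom i) F ->
  (forall p, chart_dom i p -> F (chart i p) = phi p) ->
  (forall s, `|s - t| < e -> chart_dom i (c s)) ->
  smooth_on [set s | `|s - t| < e] (fun s => chart i (c s)) ->
  forall s, `|s - t| < e ->
  is_derive s 1 (phi \o c)
    (\sum_j ('D_1 (fun s => chart i (c s)) s) 0 j *: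
        'D_(delta_mx 0 j) F (chart i (c s))).
Proof.
move=> smF Fphi cdom smb s hs.
set U := chart i @` chart_dom i.
have oU : open U := @chart_open_dom _ _ _ A i.
have Ub : forall s', `|s' - t| < e -> U (chart i (c s')).
  by move=> s' hs'; exists (c s') => //; apply: cdom.
have H := @chainV R m n F U (fun s => chart i (c s)) s oU (Ub s hs)
  (fun p j Up => (smF [::] p Up).1 _)
  (fun j => (smF [:: delta_mx 0 j] _ (Ub s hs)).2)
  ((smb [::] s hs).1 1).
apply: near_eq_is_derive H.
have := near_itv _ _ _ hs; apply: filterS => s' hs' /=.
by rewrite Fphi //; apply: cdom.
Qed.

Lemma smooth_C2 (M : Type) m n (A : manifold R M m) (phi : M -> 'rV[R]_n)
  (c : R -> M) :
  smooth_map A phi -> smooth_curve A c ->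
  (forall t, derivable (phi \o c) t 1) /\ derivable (derive1 (phi \o c)) 0 1.
Proof.
move=> sphi sc; split.
  move=> t; have [i [e e0 [cdom smb]]] := sc t.
  have [F [smF Fphi]] := sphi i.
  have [] // := @local_deriv _ _ _ _ _ _ _ _ _ _ smF Fphi cdom smb t.
  by rewrite subrr normr0.
have [i [e e0 [cdom smb]]] := sc 0.
have [F [smF Fphi]] := sphi i.
set b := fun s => chart i (c s).
set G := fun s => \sum_j ('D_1 b s) 0 j *: 'D_(delta_mx 0 j) F (b s).
have h0 : `|(0:R) - 0| < e by rewrite subrr normr0.
apply: (@near_eq_derivable _ _ _ G).
  have := near_itv _ _ _ h0; apply: filterS => s hs.
  by rewrite derive1E; have [_ ->] := @local_deriv _ _ _ _ _ _ _ _ _ _ smF Fphi cdom smb _ hs.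
set U := chart i @` chart_dom i.
have oU : open U := @chart_open_dom _ _ _ A i.
have Ub : U (b 0) by exists (c 0) => //; apply: cdom.
have db : derivable b 0 1 := (smb [::] 0 h0).1 1.
apply/(derivable_mxP G) => i0 k; rewrite (ord1 i0).
have -> : (fun x => G x 0 k) =
    (fun x => \sum_j ('D_1 b x) 0 j * ('D_(delta_mx 0 j) F (b x)) 0 k).
  by apply: funext => x; rewrite /G summxE; apply: eq_bigr => j _; rewrite !mxE.
apply: derivable_sumL => j; apply: derivableML.
  have := (smb [:: 1] 0 h0).1 1.
  by move/(derivable_mxP (fun x => 'D_1 b x)) => /(_ 0 j).
have H := @chainV R m n (fun p => 'D_(delta_mx 0 j) F p) U b 0 oU Ub
  (fun p l Up => (smF [:: delta_mx 0 j] p Up).1 _)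
  (fun l => (smF [:: delta_mx 0 l; delta_mx 0 j] _ Ub).2) db.
case: H => H _.
by move/(derivable_mxP ((fun p => 'D_(delta_mx 0 j) F p) \o b)): H => /(_ 0 k).
Qed.

End P5.
Arguments smooth_C2 {R M m n A phi c}.


Section P6.
Variable R : realType.

Lemma dotpE n (u v : 'rV[R]_n) : dotp u v = \sum_k u 0 k * v 0 k.
Proof. by rewrite /dotp !mxE; apply: eq_bigr => k _; rewrite !mxE. Qed.

Lemma dfE n (f : 'rV[R]_n -> R) p v : 'd f p v = dotp (grad f p) v.
Proof.
rewrite {1}(row_sum_delta v) linear_sum dotpE; apply: eq_bigr => k _.
by rewrite linearZ /= !mxE mulrC.
Qed.

Lemma chain2 n (f : 'rV[R]_n -> R) (g : R -> 'rV[R]_n) :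
  (forall p, differentiable f p) -> differentiable (grad f) (g 0) ->
  (forall t, derivable g t 1) -> derivable (derive1 g) 0 1 ->
  derive1 (f \o g) 0 = dotp (grad f (g 0)) (derive1 g 0) /\
  derive1 (derive1 (f \o g)) 0 =
    dotp ('d (grad f) (g 0) (derive1 g 0)) (derive1 g 0)
    + dotp (grad f (g 0)) (derive1 (derive1 g) 0).
Proof.
move=> df dgr hg hg2.
have dg : forall t, differentiable g t by move=> t; apply/derivable1_diffP.
have d1 : forall t, derive1 (f \o g) t = dotp (grad f (g t)) (derive1 g t).
  move=> t; rewrite derive1E'; last exact: differentiable_comp.
  by rewrite diff_comp // /= -derive1E' // dfE.
split; first exact: d1.
have -> : derive1 (f \o g) =
    fun t => \sum_k (grad f (g t)) 0 k * (derive1 g t) 0 k.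
  by apply: funext => t; rewrite d1 dotpE.
have dGg : differentiable (grad f \o g) 0 by apply: differentiable_comp.
have du : forall k, derivable (fun t => (grad f (g t)) 0 k) 0 1.
  move=> k; have := @diff_derivable _ _ _ _ _ (1:R) dGg.
  by move/(derivable_mxP (grad f \o g)) => /(_ 0 k).
have dv : forall k, derivable (fun t => (derive1 g t) 0 k) 0 1.
  by move=> k; move/(derivable_mxP (derive1 g)): hg2 => /(_ 0 k).
have Du : 'D_1 (grad f \o g) 0 = 'd (grad f) (g 0) (derive1 g 0).
  rewrite deriveE // diff_comp //= [derive1 g 0]derive1E' //.
rewrite derive1E derive_sumL; last by move=> k; apply: derivableML.
rewrite !dotpE -big_split /=; apply: eq_bigr => k _.
have E := congr1 (fun M : 'rV[R]_n => M 0 k)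
  (derive_mx (@diff_derivable _ _ _ _ _ (1:R) dGg)).
rewrite /= mxE Du in E.
have Ev : 'D_1 (fun t => derive1 g t 0 k) 0 = (derive1 (derive1 g) 0) 0 k.
  by rewrite derive1E (derive_mx hg2) mxE.
rewrite deriveML // -E Ev /=.
by rewrite addrC; congr (_ + _); rewrite mulrC.
Qed.

End P6.
Arguments dotpE {R n}.
Arguments dfE {R n}.
Arguments chain2 {R n f g}.


Section P7.
Variable R : realType.

Lemma is_derive_affine (V W : normedModType R) (f : V -> W) a v (c c2 : W) :
  (forall h : R, h != 0 -> h^-1 *: (f (h *: v + a) - f a) = c + h *: c2) ->
  is_derive a v f c.
Proof.
move=> H.
have L : (fun h : R => h^-1 *: ((f \o shift a) (h *: v) - f a)) @ 0^' --> c.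
  have L0 : (fun h : R => c + h *: c2) @ 0^' --> c.
    rewrite -[X in _ --> X]addr0; apply: cvgD; first exact: cvg_cst.
    rewrite -(scale0r c2); apply: cvgZ => //; [exact: cvg_within | exact: cvg_cst].
  apply: cvg_trans L0; apply: near_eq_cvg.
  near=> h; rewrite /= H //.
  by near: h; exact: nbhs_dnbhs_neq.
apply: DeriveDef; first exact: cvgP L.
exact: cvg_lim L.
Unshelve. all: by end_near.
Qed.

Definition quad n (w x : 'rV[R]_n) (al : R) (p : 'rV[R]_n) : R :=
  dotp p w + al / 2 * dotp (p - x) (p - x).

Definition qterm n (w x : 'rV[R]_n) (al : R) (k : 'I_n) (p : 'rV[R]_n) : R :=
  p 0 k * w 0 k + al / 2 * ((p 0 k - x 0 k) * (p 0 k - x 0 k)).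

Arguments quad {n}.
Arguments qterm {n}.

Lemma quadE n (w x : 'rV[R]_n) al : quad w x al = \sum_k qterm w x al k.
Proof.
apply: funext => p; rewrite fct_sumE /quad /qterm !dotpE big_split /=.
by rewrite mulr_sumr; congr (_ + _); apply: eq_bigr => k _; rewrite !mxE.
Qed.

Lemma quad_diff n (w x : 'rV[R]_n) al p : differentiable (quad w x al) p.
Proof.
rewrite quadE; apply: differentiable_sum => k.
have -> : qterm w x al k = (fun p => p 0 k) * cst (w 0 k) +
   cst (al / 2) * (((fun p => p 0 k) - cst (x 0 k)) * ((fun p => p 0 k) - cst (x 0 k))).
  by apply: funext.
apply: differentiableD; apply: differentiableM => //; try apply: differentiableM;
  try apply: differentiableB => //;
  solve [exact: differentiable_cst | exact: (@differentiable_coord R 1 n p 0 k)].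
Qed.

Lemma quad_derive n (w x : 'rV[R]_n) al p v :
  is_derive p v (quad w x al) (dotp v w + al * dotp v (p - x)).
Proof.
apply: (@is_derive_affine _ _ _ _ _ _ (al / 2 * dotp v v)) => h h0.
rewrite quadE !fct_sumE -sumrB !dotpE.
change (h^-1 * (\sum_i (qterm w x al i (h *: v + p) - qterm w x al i p)) =
  \sum_k v 0 k * w 0 k + al * \sum_k v 0 k * (p - x) 0 k +
  h * (al / 2 * \sum_k v 0 k * v 0 k)).
rewrite !mulr_sumr -!big_split /=.
apply: eq_bigr => k _; rewrite /qterm !mxE.
by field.
Qed.

Arguments quad_derive {n}.

Lemma dotp_delta n (j : 'I_n) (u : 'rV[R]_n) : dotp (delta_mx 0 j) u = u 0 j.
Proof. by rewrite /dotp -rowE !mxE. Qed.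

Lemma grad_quad n (w x : 'rV[R]_n) al p :
  grad (quad w x al) p = w + al *: (p - x).
Proof.
apply/rowP => j; rewrite !mxE -deriveE; last exact: quad_diff.
rewrite (@derive_val _ _ _ _ _ _ _ (quad_derive w x al p (delta_mx 0 j))).
by rewrite !dotp_delta !mxE.
Qed.

Lemma grad_quadE n (w x : 'rV[R]_n) al :
  grad (quad w x al) = cst w + al *: (@id 'rV[R]_n - cst x).
Proof. by apply: funext => q; rewrite grad_quad. Qed.

Lemma grad_quad_diff n (w x : 'rV[R]_n) al p :
  differentiable (grad (quad w x al)) p.
Proof.
rewrite grad_quadE; apply: differentiableD; first exact: differentiable_cst.
apply: differentiableZ; apply: differentiableB => //.
Qed.

Lemma grad_quad_d n (w x : 'rV[R]_n) al p (v : 'rV[R]_n) :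
  'd (grad (quad w x al)) p v = al *: v.
Proof.
rewrite -deriveE; last exact: grad_quad_diff.
rewrite grad_quadE.
apply: (@derive_val _ _ _ _ _ _ _ (@is_derive_affine _ _ _ _ _ _ 0 _)) => h h0.
rewrite /= scaler0 addr0 !fctE /= opprD addrACA subrr add0r -scalerBr.
have -> : h *: v + p - x - (p - x) = h *: v by rewrite -[h *: v + p - x]addrA addrK.
by rewrite !scalerA; congr (_ *: _); field.
Qed.

End P7.
Arguments quad {R n}.
Arguments qterm {R n}.
Arguments quad_diff {R n}.
Arguments quad_derive {R n}.
Arguments grad_quad {R n}.
Arguments grad_quadE {R n}.
Arguments grad_quad_diff {R n}.
Arguments grad_quad_d {R n}.


Section P8.
Variable R : realType.

Lemma dotpDl n (u1 u2 v : 'rV[R]_n) : dotp (u1 + u2) v = dotp u1 v + dotp u2 v.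
Proof. by rewrite !dotpE -big_split; apply: eq_bigr => k _; rewrite !mxE mulrDl. Qed.

Lemma dotpZl n a (u v : 'rV[R]_n) : dotp (a *: u) v = a * dotp u v.
Proof. by rewrite !dotpE mulr_sumr; apply: eq_bigr => k _; rewrite !mxE mulrA. Qed.

Lemma dotp_ge0 n (v : 'rV[R]_n) : 0 <= dotp v v.
Proof. by rewrite dotpE; apply: sumr_ge0 => k _; rewrite -expr2 sqr_ge0. Qed.

Lemma coord_sq_le n (v : 'rV[R]_n) j : v 0 j * v 0 j <= dotp v v.
Proof.
rewrite dotpE (bigD1 j) //= lerDl; apply: sumr_ge0 => k _.
by rewrite -expr2 sqr_ge0.
Qed.

Lemma hess_bound n (L : {linear 'rV[R]_n -> 'rV[R]_n}) :
  exists C, 0 <= C /\ forall v, dotp (L v) v <= C * dotp v v.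
Proof.
exists (\sum_k \sum_j `|L (delta_mx 0 j) 0 k|); split.
  by apply: sumr_ge0 => k _; apply: sumr_ge0 => j _.
move=> v.
have -> : dotp (L v) v = \sum_k \sum_j (v 0 j * v 0 k * L (delta_mx 0 j) 0 k).
  rewrite {1}(row_sum_delta v) linear_sum dotpE; apply: eq_bigr => k _.
  rewrite summxE mulr_suml; apply: eq_bigr => j _.
  by rewrite linearZ /= !mxE; rewrite mulrAC mulrC mulrA.
rewrite mulr_suml; apply: ler_sum => k _.
rewrite mulr_suml; apply: ler_sum => j _.
rewrite mulrC; apply: (le_trans (ler_norm _)).
rewrite normrM; apply: ler_wpM2l; first exact: normr_ge0.
rewrite normrM.
have h1 := @coord_sq_le _ v j; have h2 := @coord_sq_le _ v k.
have a0 := normr_ge0 (v 0 j); have b0 := normr_ge0 (v 0 k).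
have e1 : `|v 0 j| * `|v 0 j| = v 0 j * v 0 j by rewrite -normrM ger0_norm // -expr2 sqr_ge0.
have e2 : `|v 0 k| * `|v 0 k| = v 0 k * v 0 k by rewrite -normrM ger0_norm // -expr2 sqr_ge0.
nra.
Qed.

End P8.
Arguments dotpDl {R n}.
Arguments dotpZl {R n}.
Arguments dotp_ge0 {R n}.
Arguments hess_bound {R n}.


Lemma dotpC (R : realType) n (u v : 'rV[R]_n) : dotp u v = dotp v u.
Proof. by rewrite !dotpE; apply: eq_bigr => k _; rewrite mulrC. Qed.

Theorem proposition3p17 (R : realType) (M : Type) (m n : nat)
  (A : manifold R M m) (phi : M -> 'rV[R]_n) (y : M) :
  smooth_map A phi ->
  let x := phi y in
  (forall w : 'rV[R]_n,
     Wset A phi y w <->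
     exists2 alpha : R, 0 < alpha &
       two_critical A
         ((fun x' => dotp x' w + alpha / 2 * dotp (x' - x) (x' - x)) \o phi) y)
  /\ (forall w1 w2, Wset A phi y w1 -> Wset A phi y w2 -> Wset A phi y (w1 + w2))
  /\ (forall (a : R) w, 0 <= a -> Wset A phi y w -> Wset A phi y (a *: w)).
Proof.
move=> sphi x.
have qcrit : forall (w : 'rV[R]_n) (al : R) c, smooth_curve A c -> c 0 = y ->
    derive1 (quad w x al \o (phi \o c)) 0 = dotp w (derive1 (phi \o c) 0) /\
    derive1 (derive1 (quad w x al \o (phi \o c))) 0 =
      al * dotp (derive1 (phi \o c) 0) (derive1 (phi \o c) 0)
      + dotp w (derive1 (derive1 (phi \o c)) 0).
  move=> w al c sc c0.
  have [g1 g2] := smooth_C2 sphi sc.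
  have [e1 e2] := chain2 (quad_diff w x al) (grad_quad_diff w x al _) g1 g2.
  have gx : (phi \o c) 0 = x by rewrite /= c0.
  rewrite gx grad_quad grad_quad_d subrr scaler0 addr0 dotpZl in e1 e2.
  split; first exact: e1.
  exact: e2.
have S0 : forall c, 0 <= dotp (derive1 (phi \o c) 0) (derive1 (phi \o c) 0).
  by move=> c; apply: dotp_ge0.
have fwd : forall w, Wset A phi y w ->
    exists2 al : R, 0 < al & two_critical A (quad w x al \o phi) y.
  move=> w [f [[df dg] [gw crit]]].
  have [C [C0 HC]] := hess_bound ('d (grad f) x).
  exists (C + 1); first lra.
  move=> c sc c0.
  have [dfc d2fc] := crit c sc c0.
  have [g1 g2] := smooth_C2 sphi sc.
  have gx : (phi \o c) 0 = x by rewrite /= c0.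
  have [e1 e2] := chain2 df (dg _) g1 g2.
  rewrite gx gw in e1 e2.
  have [q1 q2] := qcrit w (C + 1) c sc c0.
  have HC' := HC (derive1 (phi \o c) 0).
  have S := S0 c.
  split.
    change (derive1 (quad w x (C + 1) \o (phi \o c)) 0 = 0).
    rewrite q1.
    change (derive1 (f \o (phi \o c)) 0 = 0) in dfc.
    by rewrite -e1; exact: dfc.
  change (0 <= derive1 (derive1 (quad w x (C + 1) \o (phi \o c))) 0).
  change (is_true (0 <= derive1 (derive1 (f \o (phi \o c))) 0)) in d2fc.
  rewrite q2; rewrite e2 in d2fc.
  rewrite mulrDl mul1r.
  have : C * dotp (derive1 (phi \o c) 0) (derive1 (phi \o c) 0) >= 0 by apply: mulr_ge0.
  lra.
have bwd : forall w (al : R), 0 < al -> two_critical A (quad w x al \o phi) y ->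
    Wset A phi y w.
  move=> w al al0 crit; exists (quad w x al); split.
    by split => p; [exact: quad_diff | exact: grad_quad_diff].
  by split => //; rewrite grad_quad subrr scaler0 addr0.
split.
  by move=> w; split; [exact: fwd | case=> al al0 H; exact: (bwd w al al0 H)].
split.
  move=> w1 w2 /fwd [a1 a10 c1] /fwd [a2 a20 c2].
  apply: (bwd _ (a1 + a2)); first lra.
  move=> c sc c0.
  have [q1 q2] := qcrit (w1 + w2) (a1 + a2) c sc c0.
  have [p1 p2] := qcrit w1 a1 c sc c0.
  have [r1 r2] := qcrit w2 a2 c sc c0.
  have [d1 d2] := c1 c sc c0.
  have [d3 d4] := c2 c sc c0.
  change (derive1 (quad w1 x a1 \o (phi \o c)) 0 = 0) in d1.
  change (is_true (0 <= derive1 (derive1 (quad w1 x a1 \o (phi \o c))) 0)) in d2.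
  change (derive1 (quad w2 x a2 \o (phi \o c)) 0 = 0) in d3.
  change (is_true (0 <= derive1 (derive1 (quad w2 x a2 \o (phi \o c))) 0)) in d4.
  rewrite p1 in d1; rewrite p2 in d2; rewrite r1 in d3; rewrite r2 in d4.
  split.
    change (derive1 (quad (w1 + w2) x (a1 + a2) \o (phi \o c)) 0 = 0).
    by rewrite q1 dotpDl d1 d3 addr0.
  change (0 <= derive1 (derive1 (quad (w1 + w2) x (a1 + a2) \o (phi \o c))) 0).
  rewrite q2 dotpDl mulrDl; lra.
move=> a w a0 /fwd [al al0 cr].
apply: (bwd _ (a * al + 1)); first by have := mulr_ge0 a0 (ltW al0); lra.
move=> c sc c0.
have [q1 q2] := qcrit (a *: w) (a * al + 1) c sc c0.
have [p1 p2] := qcrit w al c sc c0.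
have [d1 d2] := cr c sc c0.
change (derive1 (quad w x al \o (phi \o c)) 0 = 0) in d1.
change (is_true (0 <= derive1 (derive1 (quad w x al \o (phi \o c))) 0)) in d2.
rewrite p1 in d1; rewrite p2 in d2.
have S := S0 c.
split.
  change (derive1 (quad (a *: w) x (a * al + 1) \o (phi \o c)) 0 = 0).
  by rewrite q1 dotpZl d1 mulr0.
change (0 <= derive1 (derive1 (quad (a *: w) x (a * al + 1) \o (phi \o c))) 0).
rewrite q2 dotpZl mulrDl mul1r -mulrA -addrA [X in _ + X]addrC addrA -mulrDr.
by apply: addr_ge0 => //; apply: mulr_ge0.
Qed.
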